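(* Let $S$ be a set of primes, $n\ge1$, and $\Lambda$ a lattice in $\mathbb R^n\times\mathbb Q_S^n$. Let $f_1,f_2$ be the coordinate projections of $\mathbb R^n\times\mathbb Q_S^n$ onto $\mathbb R^n$ and $\mathbb Q_S^n$. Then $f_1$ restricted to $\Lambda$ is injective and $f_2(\Lambda)$ is dense in $\mathbb Q_S^n$.
   Context: $\mathbb Q_S={\prod}'_{p\in S}(\mathbb Q_p,\mathbb Z_p)$ is the restricted product of the $p$-adic fields $\mathbb Q_p$, $p\in S$, with respect to the $p$-adic integers $\mathbb Z_p$: sequences $(x_p)$ with $x_p\in\mathbb Z_p$ for all but finitely many $p$, topologized so that $\prod_{p\in S}\mathbb Z_p$ is a compact open subgroup with the product topology. A lattice is a discrete subgroup with compact quotient. *)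

(* Defs.v *)
From HB Require Import structures.
From mathcomp Require Import all_boot all_order all_algebra.
From mathcomp Require Import all_classical all_reals.
Set Implicit Arguments. Unset Strict Implicit. Unset Printing Implicit Defensive.
Import Order.TTheory GRing.Theory Num.Theory.
Local Open Scope classical_set_scope.
Local Open Scope ring_scope.

(* An element x of Q_p is encoded by the sequence (a k)_k, where a k is the
   unique representative in Z[1/p] /\ [0, p^k) of the class of x in
   Q_p / p^k Z_p  (~= Z[1/p] / p^k Z).  Conversely every such compatible
   sequence comes from a unique x in Q_p.  In particular x \in Z_p iff a 0 = 0,
   and x - y \in p^k Z_p iff a_x k = a_y k. *)

Definition in_Z1p (p : nat) (q : rat) : Prop :=
  exists m : nat, ((p ^ m)%N%:R * q) \is a Num.int.

Definition padic_code (p : nat) (a : nat -> rat) : Prop :=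
  forall k : nat,
    [/\ in_Z1p p (a k), 0 <= a k, a k < (p ^ k)%N%:R
      & ((a k.+1 - a k) / (p ^ k)%N%:R) \is a Num.int].

(* Q_S = restricted product of Q_p (p in S) w.r.t. Z_p: a family indexed by
   all p : nat, zero outside S, with x_p \in Z_p for all but finitely many p. *)
Definition QS_code := nat -> nat -> rat.

Definition QS_elt (S : set nat) (x : QS_code) : Prop :=
  [/\ (forall p, S p -> padic_code p (x p)),
      (forall p, ~ S p -> forall k, x p k = 0)
    & exists B : nat, forall p, (B < p)%N -> x p 0%N = 0].

Definition ratmod (s m : rat) : rat := s - (Num.floor (s / m))%:~R * m.

Definition QS_add (x y : QS_code) : QS_code :=
  fun p k => ratmod (x p k + y p k) (p ^ k)%N%:R.
Definition QS_opp (x : QS_code) : QS_code :=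
  fun p k => ratmod (- x p k) (p ^ k)%N%:R.
Definition QS_zero : QS_code := fun _ _ => 0.

Definition QSn (n : nat) := 'I_n -> QS_code.

Definition QSn_elt (S : set nat) (n : nat) (w : QSn n) : Prop :=
  forall i, QS_elt S (w i).

(* K : nat -> nat with finite support; basic neighbourhood of w:
   w + prod_p p^(K p) Z_p  (so Z_p at almost every p). *)
Definition fin_supp (K : nat -> nat) : Prop :=
  exists B : nat, forall p, (B < p)%N -> K p = 0%N.

Definition QSn_nbhd (S : set nat) (n : nat) (w : QSn n) (K : nat -> nat)
  : set (QSn n) :=
  [set v | forall i p, S p -> v i p (K p) = w i p (K p)].

Definition QSn_open (S : set nat) (n : nat) (V : set (QSn n)) : Prop :=
  forall w, QSn_elt S w -> V w ->
    exists K, fin_supp K /\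
      (forall v, QSn_elt S v -> QSn_nbhd S w K v -> V v).

Definition QSn_dense (S : set nat) (n : nat) (D : set (QSn n)) : Prop :=
  forall V, QSn_open S V -> (exists w, QSn_elt S w /\ V w) ->
    exists w, D w /\ V w.

Definition Gcar (R : realType) (n : nat) :=
  (('I_n -> R) * QSn n)%type.

Definition G_elt (R : realType) (S : set nat) (n : nat) (g : Gcar R n) : Prop :=
  QSn_elt S g.2.

Definition G_add (R : realType) (n : nat) (g h : Gcar R n) : Gcar R n :=
  (fun i => g.1 i + h.1 i, fun i => QS_add (g.2 i) (h.2 i)).
Definition G_opp (R : realType) (n : nat) (g : Gcar R n) : Gcar R n :=
  (fun i => - g.1 i, fun i => QS_opp (g.2 i)).
Definition G_zero (R : realType) (n : nat) : Gcar R n :=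
  (fun _ => 0, fun _ => QS_zero).

Definition G_nbhd (R : realType) (S : set nat) (n : nat) (g : Gcar R n)
  (eps : R) (K : nat -> nat) : set (Gcar R n) :=
  [set h | (forall i, `|h.1 i - g.1 i| < eps) /\ QSn_nbhd S g.2 K h.2].

Definition G_open (R : realType) (S : set nat) (n : nat) (A : set (Gcar R n))
  : Prop :=
  forall g, G_elt S g -> A g ->
    exists eps : R, exists K, 0 < eps /\ fin_supp K /\
      (forall h, G_elt S h -> G_nbhd S g eps K h -> A h).

Definition is_subgroup (R : realType) (S : set nat) (n : nat)
  (L : set (Gcar R n)) : Prop :=
  [/\ L `<=` @G_elt R S n, L (G_zero R n),
      (forall x y, L x -> L y -> L (G_add x y))
    & (forall x, L x -> L (G_opp x))].

Definition is_discrete (R : realType) (S : set nat) (n : nat)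
  (L : set (Gcar R n)) : Prop :=
  forall l, L l -> exists U, [/\ G_open S U, U l &
                              forall m, L m -> U m -> m = l].

(* G / L compact: open sets of G/L are exactly images of L-saturated open
   sets of G, so compactness of G/L means every cover of G by L-saturated
   open sets has a finite subcover. *)
Definition cocompact (R : realType) (S : set nat) (n : nat)
  (L : set (Gcar R n)) : Prop :=
  forall C : set (set (Gcar R n)),
    (forall U, C U -> G_open S U /\
        (forall g l, G_elt S g -> U g -> L l -> U (G_add g l))) ->
    (forall g, G_elt S g -> exists U, C U /\ U g) ->
    exists F : set (set (Gcar R n)),
      [/\ finite_set F, F `<=` C &
          forall g, G_elt S g -> exists U, F U /\ U g].

Definition is_lattice (R : realType) (S : set nat) (n : nat)
  (L : set (Gcar R n)) : Prop :=
  [/\ is_subgroup S L, is_discrete S L & cocompact S L].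

(* Main.v *)
Require Import Defs.
From HB Require Import structures.
From mathcomp Require Import all_boot all_order all_algebra.
From mathcomp Require Import all_classical all_reals.
From mathcomp Require Import ring lra zify.
Set Implicit Arguments. Unset Strict Implicit. Unset Printing Implicit Defensive.
Import Order.TTheory GRing.Theory Num.Theory.
Local Open Scope classical_set_scope.
Local Open Scope ring_scope.

Definition modeq (m a b : rat) := ((a - b) / m) \is a Num.int.

Lemma modeq_refl m a : modeq m a a.
Proof. by rewrite /modeq subrr mul0r rpred0. Qed.
Lemma modeq_sym m a b : modeq m a b -> modeq m b a.
Proof. by rewrite /modeq -opprB mulNr rpredN. Qed.
Lemma modeq_trans m a b c : modeq m a b -> modeq m b c -> modeq m a c.
Proof.
rewrite /modeq => h1 h2; have := rpredD h1 h2.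
by rewrite -mulrDl addrA subrK.
Qed.
Lemma modeq_add m a b a' b' : modeq m a a' -> modeq m b b' -> modeq m (a + b) (a' + b').
Proof.
rewrite /modeq => h1 h2; have := rpredD h1 h2.
by rewrite -mulrDl; have -> : a + b - (a' + b') = (a - a') + (b - b') by ring.
Qed.
Lemma modeq_opp m a b : modeq m a b -> modeq m (- a) (- b).
Proof. by rewrite /modeq => h; rewrite -opprD mulNr rpredN. Qed.
Lemma modeq_sub m a b a' b' : modeq m a a' -> modeq m b b' -> modeq m (a - b) (a' - b').
Proof. by move=> h1 h2; apply: modeq_add => //; apply: modeq_opp. Qed.
Lemma modeq_mulz m a b (z : rat) : z \is a Num.int -> modeq m a b -> modeq m (z * a) (z * b).
Proof. by rewrite /modeq => hz h; rewrite -mulrBr -mulrA rpredM. Qed.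
Lemma modeq_ratmod s m : m != 0 -> modeq m (ratmod s m) s.
Proof.
move=> m0; rewrite /modeq /ratmod addrAC subrr add0r mulNr mulrK //.
by rewrite rpredN intr_int.
Qed.
Lemma ratmod_ge0 s m : 0 < m -> 0 <= ratmod s m.
Proof.
move=> m0; rewrite /ratmod.
have := real_floor_le (num_real (s / m)); rewrite ler_pdivlMr // => h; lra.
Qed.
Lemma ratmod_lt s m : 0 < m -> ratmod s m < m.
Proof.
move=> m0; rewrite /ratmod.
have := real_floorD1_gt (num_real (s / m)); rewrite ltr_pdivrMr // intrD mulrDl mul1r.
move=> h; lra.
Qed.
Lemma int_abs_lt1 (z : rat) : z \is a Num.int -> `|z| < 1 -> z = 0.
Proof.
move=> hz hlt; apply/eqP; apply: contraTT hlt => nz.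
by rewrite -leNgt norm_intr_ge1.
Qed.
Lemma modeq_eq m a b : 0 <= a < m -> 0 <= b < m -> modeq m a b -> a = b.
Proof.
move=> /andP[a0 am] /andP[b0 bm] h.
have m0 : 0 < m by apply: le_lt_trans am.
have := int_abs_lt1 h; rewrite normrM normfV (gtr0_norm m0) ltr_pdivrMr // mul1r.
move=> H; have : (a - b) / m = 0 by apply: H; rewrite ltr_norml; apply/andP; split; lra.
move/eqP; rewrite mulf_eq0 invr_eq0 (gt_eqF m0) orbF subr_eq0 => /eqP //.
Qed.

Definition pk (p k : nat) : rat := (p ^ k)%N%:R.

Lemma pk_gt0 p k : (0 < p)%N -> 0 < pk p k.
Proof. by move=> p0; rewrite /pk ltr0n expn_gt0 p0. Qed.
Lemma pk_neq0 p k : (0 < p)%N -> pk p k != 0.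
Proof. by move=> p0; rewrite gt_eqF // pk_gt0. Qed.
Lemma pk_int p k : pk p k \is a Num.int.
Proof. exact: natr_int. Qed.
Lemma pkD p a b : pk p (a + b) = pk p a * pk p b.
Proof. by rewrite /pk expnD natrM. Qed.

Lemma modeq_weaken p j k x y : (0 < p)%N -> (j <= k)%N ->
  modeq (pk p k) x y -> modeq (pk p j) x y.
Proof.
move=> p0 jk; rewrite /modeq -(subnKC jk) pkD => h.
have -> : (x - y) / pk p j = (x - y) / (pk p j * pk p (k - j)) * pk p (k - j).
  by rewrite invfM -!mulrA mulVf ?mulr1 // pk_neq0.
by rewrite rpredM // pk_int.
Qed.

Lemma in_Z1p_le p x m m' : (m <= m')%N ->
  ((p ^ m)%N%:R * x) \is a Num.int -> ((p ^ m')%N%:R * x : rat) \is a Num.int.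
Proof.
move=> mm h; rewrite -(subnKC mm) expnD natrM mulrAC.
by rewrite rpredM // natr_int.
Qed.

Lemma padic_compat p a : (0 < p)%N -> padic_code p a ->
  forall j t, modeq (pk p j) (a (j + t)%N) (a j).
Proof.
move=> p0 ha j; elim=> [|t IH]; first by rewrite addn0 modeq_refl.
apply: modeq_trans IH; rewrite addnS.
apply: (@modeq_weaken p j (j + t)) => //; first exact: leq_addr.
by case: (ha (j + t)%N).
Qed.

Lemma padic_bounds p a k : padic_code p a -> 0 <= a k < pk p k.
Proof. by move=> ha; case: (ha k) => _ -> -> _. Qed.

Lemma padic_ratmod p z : (0 < p)%N -> in_Z1p p z ->
  padic_code p (fun k => ratmod z (pk p k)).
Proof.
move=> p0 [m hm] k; split.
- exists m; rewrite /ratmod mulrBr rpredB // !rpredM ?natr_int ?intr_int ?pk_int //.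
- exact: ratmod_ge0 (pk_gt0 _ _).
- exact: ratmod_lt (pk_gt0 _ _).
- rewrite -/(modeq _ _ _); apply: (@modeq_trans _ _ z).
    apply: (@modeq_weaken p k k.+1) => //; exact: modeq_ratmod (pk_neq0 _ _).
  by apply: modeq_sym; exact: modeq_ratmod (pk_neq0 _ _).
Qed.

Lemma ratmod0 m : ratmod 0 m = 0.
Proof. by rewrite /ratmod mul0r floor0 mul0r subr0. Qed.

Lemma gcd_closed (D : nat -> Prop) : D 0%N ->
  (forall a b, D a -> D b -> D (a + b)%N) ->
  (forall a b, D a -> D b -> (a <= b)%N -> D (b - a)%N) ->
  forall d c, (0 < d)%N -> D d -> D c -> D (gcdn d c).
Proof.
move=> D0 DD DB.
have DM : forall k a, D a -> D (k * a)%N.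
  by move=> k a Da; elim: k => [|k IH]; [rewrite mul0n | rewrite mulSn; apply: DD].
move=> d c d0 Dd Dc; case: (Bezoutl c d0) => a _ /dvdnP[k hk].
have -> : gcdn d c = (k * d - a * c)%N by rewrite -hk addnK.
apply: DB; try exact: DM.
by rewrite -hk leq_addl.
Qed.

Lemma nat_mul_closed (D : nat -> Prop) : D 0%N ->
  (forall a b, D a -> D b -> D (a + b)%N) -> forall k a, D a -> D (k * a)%N.
Proof.
by move=> D0 DD k a Da; elim: k => [|k IH]; [rewrite mul0n | rewrite mulSn; apply: DD].
Qed.


Lemma modeq_eqr m a b : a = b -> modeq m a b.
Proof. by move=> ->; apply: modeq_refl. Qed.
Lemma modeq_addl0 m a x : modeq m x 0 -> modeq m (a + x) a.
Proof. by rewrite /modeq; have -> : a + x - a = x - 0 by ring. Qed.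
Lemma modeq_addl0' m a x : modeq m a (a + x) -> modeq m x 0.
Proof.
rewrite /modeq => h; have -> : x - 0 = - (a - (a + x)) by ring.
by rewrite mulNr rpredN.
Qed.
Lemma Z1p_sub p a b : in_Z1p p a -> in_Z1p p b ->
  exists s, ((p ^ s)%N%:R * (a - b) : rat) \is a Num.int.
Proof.
move=> [m1 h1] [m2 h2]; exists (m1 + m2)%N; rewrite mulrBr rpredB //.
  exact: in_Z1p_le (leq_addr _ _) h1.
exact: in_Z1p_le (leq_addl _ _) h2.
Qed.
Section Main.
Variables (R : realType) (S : set nat) (n : nat) (L : set (Gcar R n)).
Hypothesis hS : forall p, S p -> prime p.
Hypothesis hL : is_lattice S L.

Lemma Lsub : L `<=` @G_elt R S n. Proof. by case: hL => -[]. Qed.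
Lemma L0 : L (G_zero R n). Proof. by case: hL => -[]. Qed.
Lemma Ladd x y : L x -> L y -> L (G_add x y). Proof. by case: hL => -[] _ _ h _ _ _; apply: h. Qed.
Lemma Lopp x : L x -> L (G_opp x). Proof. by case: hL => -[] _ _ _ h _ _; apply: h. Qed.

Lemma Sgt0 p : S p -> (0 < p)%N. Proof. by move/hS/prime_gt0. Qed.

Section Dens.
Variable K : nat -> nat.
Hypothesis hK : fin_supp K.

Definition cong (r r' : 'I_n -> nat -> rat) :=
  forall i p, S p -> modeq (pk p (K p)) (r i p) (r' i p).
Definition res (v : QSn n) : 'I_n -> nat -> rat := fun i p => v i p (K p).
Definition E r := exists l, L l /\ cong r (res l.2).

Lemma cong_eq r r' : (forall i p, S p -> r i p = r' i p) -> cong r r'.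
Proof. by move=> h i p Sp; rewrite h //; apply: modeq_refl. Qed.
Lemma cong_sym r r' : cong r r' -> cong r' r.
Proof. by move=> h i p Sp; apply: modeq_sym; apply: h. Qed.
Lemma cong_trans r r' r'' : cong r r' -> cong r' r'' -> cong r r''.
Proof. by move=> h h' i p Sp; apply: modeq_trans (h _ _ Sp) (h' _ _ Sp). Qed.

Lemma E_cong r r' : E r -> cong r r' -> E r'.
Proof.
move=> [l [Ll h]] h'; exists l; split => //.
exact: cong_trans (cong_sym h') h.
Qed.

Lemma E0 : E (fun _ _ => 0).
Proof. by exists (G_zero R n); split; [exact: L0 | apply: cong_eq]. Qed.

Lemma res_add (v v' : QSn n) :
  cong (res (fun i => QS_add (v i) (v' i))) (fun i p => res v i p + res v' i p).
Proof. move=> i p Sp; exact: modeq_ratmod (pk_neq0 _ (Sgt0 Sp)). Qed.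

Lemma res_opp (v : QSn n) :
  cong (res (fun i => QS_opp (v i))) (fun i p => - res v i p).
Proof. move=> i p Sp; exact: modeq_ratmod (pk_neq0 _ (Sgt0 Sp)). Qed.

Lemma E_add r r' : E r -> E r' -> E (fun i p => r i p + r' i p).
Proof.
move=> [l [Ll h]] [l' [Ll' h']]; exists (G_add l l'); split; first exact: Ladd.
apply: cong_trans (cong_sym (res_add _ _)).
by move=> i p Sp; apply: modeq_add; [apply: h | apply: h'].
Qed.

Lemma E_opp r : E r -> E (fun i p => - r i p).
Proof.
move=> [l [Ll h]]; exists (G_opp l); split; first exact: Lopp.
apply: cong_trans (cong_sym (res_opp _)).
by move=> i p Sp; apply: modeq_opp; apply: h.
Qed.

Lemma E_sub r r' : E r -> E r' -> E (fun i p => r i p - r' i p).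
Proof. by move=> h h'; apply: E_add => //; apply: E_opp. Qed.


Lemma pigeon : exists N, forall f : nat -> QSn n, (forall j, QSn_elt S (f j)) ->
  exists j j', [/\ (j < j')%N, (j' <= N)%N &
     E (fun i p => res (f j') i p - res (f j) i p)].
Proof.
case: hL => _ _ Lcoc.
pose A := fun g : Gcar R n =>
  [set h : Gcar R n | E (fun i p => res h.2 i p - res g.2 i p)].
have := Lcoc [set U | exists g, G_elt S g /\ U = A g].
case=> [U [g [_ ->]]|g gG|F [finF FC Fcov]].
- split.
    move=> h hG Ah; exists 1, K; split => //; split => // h' _ [_ nb].
    rewrite /A /= in Ah *. eapply E_cong; first exact Ah. apply: cong_eq => i p Sp; by rewrite /res nb.
  move=> g0 l _ Ag0 Ll; rewrite /A /=.
  have El : E (res l.2) by exists l; split => //; apply: cong_eq.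
  eapply E_cong; first exact (E_add Ag0 El).
  move=> i p Sp; rewrite /res /=.
  set a := g0.2 i p (K p); set b := g.2 i p (K p); set c := l.2 i p (K p).
  have -> : a - b + c = a + c - b by ring.
  apply: modeq_sub; last exact: modeq_refl.
  exact: modeq_sym (modeq_ratmod _ (pk_neq0 _ (Sgt0 Sp))).
- exists (A g); split; first by exists g.
  rewrite /A /=.
  by eapply E_cong; first exact E0; apply: cong_eq => i p _; rewrite subrr.
- move: finF => /finite_seqP[s sE].
  exists (size s) => f fG.
  pose pt := fun j : nat => ((fun _ : 'I_n => (0 : R)), f j) : Gcar R n.
  have hidx : forall j : 'I_(size s).+1, exists k : 'I_(size s), (nth set0 s k) (pt j).
    move=> j; have [U [FU Upt]] := Fcov (pt j) (fG j).
    have Us : U \in s by move: FU; rewrite sE.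
    by exists (Ordinal (etrans (index_mem U s) Us)); rewrite /= nth_index.
  have [idx hidx'] := choice hidx.
  have [[j [j' [jj' e]]]|nex] := pselect (exists j j' : 'I_(size s).+1, (j < j')%N /\ idx j = idx j').
    have := hidx' j; have := hidx' j'; rewrite -e.
    have : F (nth set0 s (idx j)) by rewrite sE /=; apply: mem_nth.
    move=> /FC [g [_ ->]]; rewrite /A /= => Aj' Aj.
    exists j, j'; split => //; first by rewrite -ltnS.
    eapply E_cong; first exact (E_sub Aj' Aj); apply: cong_eq => i p _ /=; ring.
  exfalso.
  have inj : injective idx.
    move=> a b e; case: (ltngtP a b) => h.
    - by exfalso; apply: nex; exists a, b.
    - by exfalso; apply: nex; exists b, a.
    - exact: val_inj.
  by have := leq_card _ inj; rewrite !card_ord ltnn.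
Qed.


Lemma E_prime p (r : 'I_n -> rat) : S p -> (forall i, in_Z1p p (r i)) ->
  E (fun i q => if q == p then r i else 0).
Proof.
move=> Sp hr; have p_pr := hS Sp; have p0 := prime_gt0 p_pr; have p1 := prime_gt1 p_pr.
have [N HN] := pigeon.
pose y := fun i => r i / pk p N.
pose z := fun (j : nat) (i : 'I_n) (q : nat) => if q == p then j%:R * y i else 0.
pose f := fun j : nat => (fun i q k => ratmod (z j i q) (pk q k)) : QSn n.
have fG : forall j, QSn_elt S (f j).
  move=> j i; split.
  - move=> q Sq; apply: padic_ratmod (Sgt0 Sq) _; rewrite /z.
    case: (eqVneq q p) => [->|_]; last by exists 0%N; rewrite mulr0 rpred0.
    case: (hr i) => m hm; exists (m + N)%N.
    have -> : ((p ^ (m + N))%N%:R * (j%:R * y i) : rat) = j%:R * ((p ^ m)%N%:R * r i).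
      rewrite /y -/(pk p (m + N)) -/(pk p m) pkD; field; exact: pk_neq0.
    by rewrite rpredM // natr_int.
  - move=> q nSq k; rewrite /f /z; case: (eqVneq q p) => [e|_]; last exact: ratmod0.
    by subst q.
  - exists p => q pq; rewrite /f /z gtn_eqF //; exact: ratmod0.
have [j [j' [jj' j'N Ej]]] := HN f fG.
pose D := fun d : nat => E (fun i q => if q == p then d%:R * y i else 0).
have D0 : D 0%N.
  by eapply E_cong; first exact E0; apply: cong_eq => i q _; case: (eqVneq q p); rewrite ?mul0r.
have DD : forall a b, D a -> D b -> D (a + b)%N.
  move=> a b Da Db; eapply E_cong; first exact (E_add Da Db).
  by apply: cong_eq => i q _; case: (eqVneq q p); rewrite ?addr0 // natrD mulrDl.
have DB : forall a b, D a -> D b -> (a <= b)%N -> D (b - a)%N.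
  move=> a b Da Db ab; eapply E_cong; first exact (E_sub Db Da).
  by apply: cong_eq => i q _; case: (eqVneq q p); rewrite ?subr0 // natrB // mulrBl.
have Dd : D (j' - j)%N.
  eapply E_cong; first exact Ej.
  move=> i q Sq; rewrite /res /f.
  eapply modeq_trans.
    apply: modeq_sub; exact: modeq_ratmod (pk_neq0 _ (Sgt0 Sq)).
  rewrite /z; case: (eqVneq q p) => _; last by rewrite subr0; apply: modeq_refl.
  by rewrite natrB 1?ltnW // mulrBl; apply: modeq_refl.
have [mf hmf] := choice hr.
pose M := (\max_(i < n) mf i)%N.
have hM : forall i, ((p ^ M)%N%:R * r i : rat) \is a Num.int.
  move=> i; apply: (@in_Z1p_le p (r i) (mf i) M); last exact: hmf.
  rewrite /M; exact: leq_bigmax.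
have Dc : D (p ^ (M + N + K p))%N.
  eapply E_cong; first exact E0.
  move=> i q Sq; rewrite /=; case: (eqVneq q p) => [->|_]; last exact: modeq_refl.
  rewrite /modeq.
  have -> : (0 - (p ^ (M + N + K p))%N%:R * y i) / pk p (K p) = - ((p ^ M)%N%:R * r i).
    rewrite /y -/(pk p (M + N + K p)) -/(pk p M) !pkD.
    field; rewrite ?pk_neq0 //.
  by rewrite rpredN.
have jj'0 : (0 < j' - j)%N by rewrite subn_gt0.
have Dg := gcd_closed D0 DD DB jj'0 Dd Dc.
have : (gcdn (j' - j) (p ^ (M + N + K p)) %| p ^ (M + N + K p))%N by apply: dvdn_gcdr.
case/(dvdn_pfactor _ _ p_pr) => e _ ge.
have gle : (gcdn (j' - j) (p ^ (M + N + K p)) <= N)%N.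
  apply: leq_trans (leq_trans (leq_subr j j') j'N).
  by apply: dvdn_leq => //; apply: dvdn_gcdl.
have eN : (e <= N)%N.
  rewrite -(leq_exp2l _ _ p1); apply: ltnW; apply: leq_ltn_trans (ltn_expl _ p1).
  by rewrite -ge.
have : (p ^ e %| p ^ N)%N by rewrite dvdn_exp2l.
case/dvdnP => k hk.
have DN : D (p ^ N)%N by rewrite hk -ge; apply: nat_mul_closed.
eapply E_cong; first exact DN.
apply: cong_eq => i q _; case: (eqVneq q p) => // _.
rewrite /y -/(pk p N) mulrC divfK //; exact: pk_neq0.
Qed.


Lemma dens_main (w : QSn n) : QSn_elt S w ->
  exists l, L l /\ forall i p, S p -> l.2 i p (K p) = w i p (K p).
Proof.
move=> wG; case: hK => BK hBK.
have : forall i, exists B, forall p, (B < p)%N -> w i p 0%N = 0 by move=> i; case: (wG i).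
case/choice => Bf hBf.
pose B' := (maxn BK (\max_(i < n) Bf i)).+1.
pose t := res w.
have step : forall b, E (fun i q => if (q < b)%N then t i q else 0).
  elim=> [|b IH].
    by eapply E_cong; first exact E0; apply: cong_eq.
  have [Sb|nSb] := pselect (S b).
    have Eb : E (fun i q => if q == b then t i b else 0).
      apply: E_prime => // i; case: (wG i) => h _ _; by case: (h b Sb (K b)).
    eapply E_cong; first exact (E_add IH Eb).
    apply: cong_eq => i q _ /=.
    case: (ltngtP q b) => h.
    - by rewrite addr0 ltnS ltnW.
    - by rewrite addr0 ltnNge h.
    - by rewrite h ltnSn add0r.
  eapply E_cong; first exact IH.
  apply: cong_eq => i q Sq /=.
  case: (ltngtP q b) => h.
  - by rewrite ltnS ltnW.
  - by rewrite ltnNge h.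
  - by exfalso; apply: nSb; rewrite -h.
have Et : E t.
  eapply E_cong; first exact (step B').
  apply: cong_eq => i q _; case: ltnP => // hq.
  have hq1 : (BK < q)%N by apply: leq_trans hq; rewrite ltnS leq_maxl.
  have hq2 : (Bf i < q)%N.
    apply: leq_trans hq; rewrite ltnS; apply: leq_trans (leq_maxr _ _).
    exact: leq_bigmax.
  by rewrite /t /res hBK // hBf.
case: Et => l [Ll hl]; exists l; split => // i p Sp.
apply: modeq_eq; last exact: (modeq_sym (hl i p Sp)).
- have := Lsub Ll i; case=> h _ _; exact: padic_bounds (h p Sp).
- case: (wG i) => h _ _; exact: padic_bounds (h p Sp).
Qed.

End Dens.

Lemma Z1p_code (v : QSn n) i p k : QSn_elt S v -> S p -> in_Z1p p (v i p k).
Proof. by move=> hv Sp; case: (hv i) => h _ _; case: (h p Sp k). Qed.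

Lemma bounds_code (v : QSn n) i p k : QSn_elt S v -> S p -> 0 <= v i p k < pk p k.
Proof. by move=> hv Sp; case: (hv i) => h _ _; apply: padic_bounds (h p Sp). Qed.

Lemma inj_main l m : L l -> L m -> l.1 = m.1 -> l = m.
Proof.
move=> Ll Lm e1.
case: hL => _ Ldisc _.
have [U [Uo Ul Uuniq]] := Ldisc l Ll.
have lG := Lsub Ll; have mG := Lsub Lm.
have [eps [K [eps0 [hK nbU]]]] := Uo l lG Ul.
pose z := G_add m (G_opp l).
have Lz : L z by apply: Ladd => //; apply: Lopp.
pose h := fun j => iter j (fun x => G_add x z) l.
have Lh : forall j, L (h j) by elim => // j IH; apply: Ladd.
have h1 : forall j i, (h j).1 i = l.1 i.
  elim=> // j IH i; rewrite /h /= -/(h j) IH e1 subrr addr0 //.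
have h2 : forall j i p k, S p -> modeq (pk p k) ((h j).2 i p k)
    (l.2 i p k + j%:R * (m.2 i p k - l.2 i p k)).
  elim=> [|j IH] i p k Sp.
    by apply: modeq_eqr; rewrite /= mul0r addr0.
  have pk0 := pk_neq0 k (Sgt0 Sp).
  rewrite /h /= -/(h j).
  eapply modeq_trans; first exact: modeq_ratmod pk0.
  eapply modeq_trans.
    apply: modeq_add; first exact: IH.
    eapply modeq_trans; first exact: modeq_ratmod pk0.
    apply: modeq_add; first exact: modeq_refl.
    exact: modeq_ratmod pk0.
  by apply: modeq_eqr; rewrite mulrSr; ring.
have hs : forall x : 'I_n * nat, exists s, S x.2 ->
    ((x.2 ^ s)%N%:R * (m.2 x.1 x.2 (K x.2) - l.2 x.1 x.2 (K x.2)) : rat) \is a Num.int.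
  move=> [i p] /=; have [Sp|nSp] := pselect (S p); last by exists 0%N.
  have [s hs] := Z1p_sub (Z1p_code i (K p) mG Sp) (Z1p_code i (K p) lG Sp).
  by exists s.
have [sf hsf] := choice hs.
have : forall i, exists B, forall p, (B < p)%N -> l.2 i p 0%N = 0 by move=> i; case: (lG i).
case/choice => Blf hBl.
have : forall i, exists B, forall p, (B < p)%N -> m.2 i p 0%N = 0 by move=> i; case: (mG i).
case/choice => Bmf hBm.
case: hK => BK hBK.
pose B0 := maxn BK (maxn (\max_(i < n) Blf i) (\max_(i < n) Bmf i)).
pose T := (\max_(q < B0.+1) \max_(i < n) (q : nat) ^ (K q + sf (i, nat_of_ord q)))%N.
pose M := T`!.
have M0 : (0 < M)%N by apply: fact_gt0.
have hMd : forall i p, S p ->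
    modeq (pk p (K p)) (M%:R * (m.2 i p (K p) - l.2 i p (K p))) 0.
  move=> i p Sp; have p0 := Sgt0 Sp.
  have [hp|hp] := leqP p B0.
    have le1 : (p ^ (K p + sf (i, p)) <= \max_(i0 < n) p ^ (K p + sf (i0, p)))%N.
      exact: leq_bigmax.
    have hp' : (p < B0.+1)%N by rewrite ltnS.
    have le2 := @leq_bigmax _ (fun q : 'I_B0.+1 =>
        \max_(i0 < n) (q : nat) ^ (K q + sf (i0, nat_of_ord q)))%N (Ordinal hp').
    have : (p ^ (K p + sf (i, p)) %| M)%N.
      apply: dvdn_fact; rewrite expn_gt0 p0 /=.
      exact: leq_trans le1 le2.
    case/dvdnP => c hc.
    rewrite /modeq hc natrM -/(pk p (K p + sf (i, p))) pkD.
    have -> : (c%:R * (pk p (K p) * pk p (sf (i, p))) * (m.2 i p (K p) - l.2 i p (K p)) - 0)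
        / pk p (K p) = c%:R * ((p ^ sf (i, p))%N%:R * (m.2 i p (K p) - l.2 i p (K p))).
      rewrite /pk; field; rewrite -/(pk p (K p)); exact: pk_neq0.
    rewrite rpredM ?natr_int //; exact: (hsf (i, p) Sp).
  have Kp0 : K p = 0%N by apply: hBK; apply: leq_ltn_trans hp; apply: leq_maxl.
  have hb1 : (Blf i <= \max_(i0 < n) Blf i0)%N by exact: leq_bigmax.
  have hb2 : (Bmf i <= \max_(i0 < n) Bmf i0)%N by exact: leq_bigmax.
  move: hp hb1 hb2; rewrite /B0.
  set u := (\max_(i0 < n) Blf i0)%N; set v := (\max_(i0 < n) Bmf i0)%N => hp hb1 hb2.
  rewrite Kp0 hBl ?hBm; first by rewrite subrr mulr0; apply: modeq_refl.
    lia.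
  lia.
have hMU : U (h M).
  apply: nbU; first exact: Lsub (Lh M).
  split; first by move=> i; rewrite h1 subrr normr0.
  move=> i p Sp.
  apply: modeq_eq; [exact: bounds_code (Lsub (Lh M)) Sp | exact: bounds_code lG Sp |].
  eapply modeq_trans; first exact: h2.
  exact: modeq_addl0 (hMd i p Sp).
have hMl : h M = l by apply: Uuniq => //; exact: Lh.
have key : forall i p k, S p -> modeq (pk p k) (M%:R * (m.2 i p k - l.2 i p k)) 0.
  move=> i p k Sp; apply: (@modeq_addl0' _ (l.2 i p k)).
  by have := h2 M i p k Sp; rewrite hMl.
have main : forall i p j, S p -> m.2 i p j = l.2 i p j.
  move=> i p j Sp; have p_pr := hS Sp; have p0 := prime_gt0 p_pr; have p1 := prime_gt1 p_pr.
  pose k := (j + M)%N.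
  pose D := fun d : nat => modeq (pk p k) (d%:R * (m.2 i p k - l.2 i p k)) 0.
  have D0 : D 0%N by apply: modeq_eqr; rewrite mul0r.
  have DD : forall a b, D a -> D b -> D (a + b)%N.
    move=> a b Da Db; rewrite /D natrD mulrDl.
    by have := modeq_add Da Db; rewrite addr0.
  have DB : forall a b, D a -> D b -> (a <= b)%N -> D (b - a)%N.
    move=> a b Da Db ab; rewrite /D natrB // mulrBl.
    by have := modeq_sub Db Da; rewrite subr0.
  have [s hs'] := Z1p_sub (Z1p_code i k mG Sp) (Z1p_code i k lG Sp).
  have Dc : D (p ^ (k + s))%N.
    rewrite /D /modeq -/(pk p (k + s)) pkD.
    have -> : (pk p k * pk p s * (m.2 i p k - l.2 i p k) - 0) / pk p k
        = (p ^ s)%N%:R * (m.2 i p k - l.2 i p k).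
      rewrite /pk; field; rewrite -/(pk p k); exact: pk_neq0.
    exact: hs'.
  have Dg := gcd_closed D0 DD DB M0 (key i p k Sp) Dc.
  have : (gcdn M (p ^ (k + s)) %| p ^ (k + s))%N by apply: dvdn_gcdr.
  case/(dvdn_pfactor _ _ p_pr) => e _ ge.
  have gle : (gcdn M (p ^ (k + s)) <= M)%N by apply: dvdn_leq => //; apply: dvdn_gcdl.
  have eM : (e <= M)%N.
    rewrite -(leq_exp2l _ _ p1); apply: ltnW; apply: leq_ltn_trans (ltn_expl _ p1).
    by rewrite -ge.
  have : (p ^ e %| p ^ M)%N by rewrite dvdn_exp2l.
  case/dvdnP => c hc.
  have DM : D (p ^ M)%N by rewrite hc -ge; apply: (nat_mul_closed D0 DD).
  have hj : modeq (pk p j) (m.2 i p k) (l.2 i p k).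
    move: DM; rewrite /D /modeq /k -/(pk p M) pkD.
    have -> : (pk p M * (m.2 i p (j + M)%N - l.2 i p (j + M)%N) - 0) / (pk p j * pk p M)
        = (m.2 i p (j + M)%N - l.2 i p (j + M)%N) / pk p j.
      by field; rewrite !pk_neq0.
    by [].
  have cm : modeq (pk p j) (m.2 i p k) (m.2 i p j).
    case: (mG i) => hc' _ _; exact: padic_compat p0 (hc' p Sp) j M.
  have cl : modeq (pk p j) (l.2 i p k) (l.2 i p j).
    case: (lG i) => hc' _ _; exact: padic_compat p0 (hc' p Sp) j M.
  apply: modeq_eq; [exact: bounds_code mG Sp | exact: bounds_code lG Sp |].
  exact: modeq_trans (modeq_sym cm) (modeq_trans hj cl).
move: l m Ll Lm e1 lG mG {Ul Uuniq nbU z Lz h Lh h1 h2 hs sf hsf Blf hBl Bmf hBm B0 T M M0 hMd hMU hMl key} main.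
move=> [l1 l2] [m1 m2] _ _ /= -> lG mG main; congr pair.
apply: funext => i; apply: funext => p; apply: funext => k.
have [Sp|nSp] := pselect (S p); first by rewrite main.
case: (lG i) => _ h _; case: (mG i) => _ hh _. by move: (h p nSp k) (hh p nSp k) => /= -> ->.
Qed.

End Main.

Local Close Scope ring_scope.
Unset Implicit Arguments.

Theorem lemma6p6 (R : realType) (S : set nat) (n : nat) (L : set (Gcar R n)) :
  (forall p, S p -> prime p) -> (0 < n)%N -> is_lattice S L ->
  (forall l m, L l -> L m -> l.1 = m.1 -> l = m) /\
  QSn_dense S [set w | exists l, L l /\ l.2 = w].
Proof.
move=> hS _ hL; split.
  by move=> l m Ll Lm e; apply: (inj_main hS hL Ll Lm e).
move=> V Vo [w [wG Vw]].
have [K [hK nb]] := Vo w wG Vw.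
have [l [Ll hl]] := dens_main hS hL hK wG.
exists l.2; split; first by exists l.
by apply: nb => //; apply: (Lsub hL Ll).
Qed.
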